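(* Suppose $X$ is a Fr\'echet $L$-selective space in which every countable subspace is first countable. Then $X$ is strongly $L$-selective.
   Context: All spaces are assumed $T_1$. For spaces $Y$, $X$, a map $\varphi:Y\to\mathcal P(X)\setminus\{\emptyset\}$ is lower semicontinuous (l.s.c.) if $\{y:\varphi(y)\cap U\neq\emptyset\}$ is open in $Y$ for every open $U\subseteq X$; a selection is a map $f:Y\to X$ with $f(y)\in\varphi(y)$ for all $y$. $X$ is strongly $Y$-selective if every l.s.c. map $Y\to\mathcal P(X)\setminus\{\emptyset\}$ has a continuous selection, and $Y$-selective if every l.s.c. map from $Y$ to the nonempty closed subsets of $X$ has a continuous selection. (Strongly) $L$-selective means (strongly) $(\omega+1)$-selective, with $\omega+1$ carrying the order topology. Fr\'echet means: whenever $x\in\overline A$ there is a sequence in $A$ converging to $x$. *)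

(* Defs.v *)
From mathcomp Require Import all_boot all_order.
From mathcomp Require Import all_classical all_reals all_analysis.
Set Implicit Arguments. Unset Strict Implicit. Unset Printing Implicit Defensive.
Local Open Scope classical_set_scope.

(* The space omega+1 with its order topology, modelled on [option nat]:
   [Some n] is the natural number n and [None] is the point omega. *)
Definition omega1 := option nat.

(* Open sets of the order topology of omega+1: every point n < omega is
   isolated, and the basic neighbourhoods of omega are the tails (N, omega]. *)
Definition omega1_open (U : set omega1) : Prop :=
  U None -> exists N : nat, forall n : nat, (N <= n)%N -> U (Some n).

Definition omega1_continuous (X : topologicalType) (f : omega1 -> X) : Prop :=
  forall U : set X, open U -> omega1_open (f @^-1` U).

Definition omega1_lsc (X : topologicalType) (phi : omega1 -> set X) : Prop :=
  forall U : set X, open U -> omega1_open [set y | phi y `&` U !=set0].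

Definition omega1_cont_selection (X : topologicalType)
    (phi : omega1 -> set X) (f : omega1 -> X) : Prop :=
  omega1_continuous f /\ forall y, phi y (f y).

Definition strongly_L_selective (X : topologicalType) : Prop :=
  forall phi : omega1 -> set X,
    (forall y, phi y !=set0) -> omega1_lsc phi ->
    exists f : omega1 -> X, omega1_cont_selection phi f.

Definition L_selective (X : topologicalType) : Prop :=
  forall phi : omega1 -> set X,
    (forall y, phi y !=set0 /\ closed (phi y)) -> omega1_lsc phi ->
    exists f : omega1 -> X, omega1_cont_selection phi f.

Definition frechet_space (X : topologicalType) : Prop :=
  forall (A : set X) (x : X), closure A x ->
    exists u : nat -> X, (forall n, A (u n)) /\ u @ \oo --> x.

(* The subspace A of X is first countable: every point x of A has a countable
   local base in the subspace topology; subspace-open sets are V `&` A with V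
   open in X. *)
Definition subspace_first_countable (X : topologicalType) (A : set X) : Prop :=
  forall x : X, A x ->
    exists B : nat -> set X,
      (forall n, open (B n) /\ B n x) /\
      (forall U : set X, open U -> U x -> exists n, B n `&` A `<=` U `&` A).

Definition countable_subspaces_first_countable (X : topologicalType) : Prop :=
  forall A : set X, countable A -> subspace_first_countable A.

(* Main.v *)
Require Import Defs.
From mathcomp Require Import all_boot all_order.
From mathcomp Require Import all_classical all_reals all_analysis.
Local Open Scope classical_set_scope.

Definition Eset {X : topologicalType} (B : nat -> set X) (y : X) (k : nat) : set X :=
  if pselect (B k y) then B k else setT.

Fixpoint Dset {X : topologicalType} (B : nat -> set X) (y : X) (k : nat) : set X :=
  match k with 0 => Eset B y 0 | k'.+1 => Dset B y k' `&` Eset B y k'.+1 end.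

Lemma Eset_open {X : topologicalType} (B : nat -> set X) y k :
  (forall n, open (B n)) -> open (Eset B y k).
Proof. by move=> HB; rewrite /Eset; case: pselect => ?; [exact: HB|exact: openT]. Qed.

Lemma Eset_in {X : topologicalType} (B : nat -> set X) y k : Eset B y k y.
Proof. by rewrite /Eset; case: pselect. Qed.

Lemma Dset_open {X : topologicalType} (B : nat -> set X) y k :
  (forall n, open (B n)) -> open (Dset B y k).
Proof.
move=> HB; elim: k => [|k IH] /=; first exact: Eset_open.
by apply: openI => //; exact: Eset_open.
Qed.

Lemma Dset_in {X : topologicalType} (B : nat -> set X) y k : Dset B y k y.
Proof. by elim: k => [|k IH] /=; [exact: Eset_in|split => //; exact: Eset_in]. Qed.

Lemma Dset_sub {X : topologicalType} (B : nat -> set X) y k m :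
  (m <= k)%N -> B m y -> Dset B y k `<=` B m.
Proof.
move=> + Bm; elim: k => [|k IH] /=.
  rewrite leqn0 => /eqP e; subst m => z; rewrite /Eset.
  by case: pselect => [_ //|nB _]; case: nB.
move=> H z [Dz Ez].
case: (ltnP m k.+1) => [lt|ge].
  by apply: IH => //; rewrite -ltnS.
have e : m = k.+1 by apply/eqP; rewrite eqn_leq H ge.
subst m; move: Ez; rewrite /Eset.
by case: pselect => [_ //|nB _]; case: nB.
Qed.

Theorem mainTheorem20 (X : topologicalType) :
  @accessible_space X ->
  frechet_space X ->
  L_selective X ->
  countable_subspaces_first_countable X ->
  strongly_L_selective X.
Proof.
move=> T1 Fr Lsel CFC phi phine philsc.
have [x phix] := phine None.
pose psi (y : omega1) : set X :=
  match y with None => [set x] | Some n => closure (phi (Some n)) end.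
have [g [gc gsel]] : exists g, omega1_cont_selection psi g.
  have H1 : forall y, psi y !=set0 /\ closed (psi y).
    case=> [n|] /=; split.
    - have [z pz] := phine (Some n); exists z; exact: subset_closure.
    - exact: closed_closure.
    - by exists x.
    - exact: accessible_closed_set1.
  have H2 : omega1_lsc psi.
  move=> U oU /= [z [/= -> Ux]].
  have [N HN] := philsc U oU (ex_intro _ x (conj phix Ux)).
  exists N => n /HN [w [pw Uw]]; exists w; split => //; exact: subset_closure.
  exact: (Lsel psi H1 H2).
have gx : g None = x by have := gsel None.
have [s Hs] : {s : nat -> nat -> X & forall n,
    (forall k, phi (Some n) (s n k)) /\ s n @ \oo --> g (Some n)}.
  apply: (@choice nat (nat -> X) (fun n u => (forall k, phi (Some n) (u k)) /\ u @ \oo --> g (Some n))) => n.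
  apply: Fr; exact: (gsel (Some n)).
pose F (i : option nat) : set X :=
  match i with None => [set x] | Some n => range (s n) end.
pose A := \bigcup_(i in [set: option nat]) F i.
have Ax : A x by exists None.
have As n k : A (s n k) by exists (Some n) => //; exists k.
have cA : countable A.
  apply: bigcup_countable; first exact: countableP.
  case=> [n|] _ /=; last exact: countable1.
  apply: sub_countable (card_image_le _ _) _; exact: countableP.
have [B [HB1 HB2]] := CFC A cA x Ax.
have oB n : open (B n) by case: (HB1 n).
have [kk Hkk] : {kk : nat -> nat & forall n, Dset B (g (Some n)) n (s n (kk n))}.
  apply: (@choice nat nat (fun n k => Dset B (g (Some n)) n (s n k))) => n.
  apply: (filter_ex (F := \oo)); apply: (Hs n).2.
  apply: open_nbhs_nbhs; split; [exact: Dset_open|exact: Dset_in].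
exists (fun y => match y with None => x | Some n => s n (kk n) end); split.
  move=> U oU /= Ux.
  have [m0 Hm0] := HB2 U oU Ux.
  have := gc (B m0) (oB m0); rewrite /omega1_open /= gx => /(_ (HB1 m0).2).
  move=> [N HN]; exists (maxn N m0) => n; rewrite geq_max => /andP [Nn mn].
  have : (B m0 `&` A) (s n (kk n)).
    split; last exact: As.
    apply: (@Dset_sub _ B (g (Some n)) n m0 mn (HN n Nn)); exact: Hkk.
  by move=> /Hm0 [].
by case=> [n|] //=; exact: (Hs n).1.
Qed.
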